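(* Let $(M,g)$ be a spherically symmetric spacetime and let $V\subset M$ be a region covered by comoving coordinates $(t,R,\theta,\psi)$ with $0\le t<T$ and $0\le R<R_b$, for some $T\in(0,+\infty]$ and $R_b>0$, in which \[ g=-e^{2\Phi}\,dt^2+e^{2\Psi}\,dR^2+r^2\,d\Omega^2,\qquad u=e^{-\Phi}\partial_t, \] where $\Phi,\Psi,r$ are functions of $(t,R)$ and $d\Omega^2=d\theta^2+\sin^2\theta\, d\psi^2$. Assume the coordinates are normalized so that $\Phi(t,R_b)=0$ and $r(0,R)=R$. Let $\sigma>0$ be a constant and let $(g,\rho,n,u,\phi)$ be a spherically symmetric solution on $V$ of the following system describing a pressureless fluid (dust, $p=0$) with energy density $\rho$, particle number density $n$ and four-velocity $u$, together with a scalar field $\phi$: \[ \nabla_\mu(\rho u^\mu)=\sigma n,\qquad \rho\, u^\mu\nabla_\mu u^\nu=0,\qquad \nabla_\mu(n u^\mu)=0, \] \[ R_{\mu\nu}-\tfrac12 g_{\mu\nu}\mathcal R+\phi\, g_{\mu\nu}=T_{\mu\nu},\qquad \nabla_\nu\phi=\sigma J_\nu, \] where $T^{\mu\nu}=\rho u^\mu u^\nu$, $J^\mu=n u^\mu$, $R_{\mu\nu}$ is the Ricci tensor and $\mathcal R$ the scalar curvature of $g$ (units $8\pi G=c=1$). Assume $\rho$ and $n$ are nowhere vanishing on $V$. Then $\rho$, $n$ and $\phi$ are functions of $t\in[0,T)$ only, and there exist a positive function $a:[0,T)\to(0,\infty)$ and a constant $k\in\mathbb R$ such that on $V$ \[ g=-dt^2+a(t)^2\Big(\frac{dR^2}{1-kR^2}+R^2d\Omega^2\Big),\qquad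 u=\partial_t. \]
   Context: The fluid is a perfect fluid with zero pressure; the system above is the projection (along $u$ and orthogonal to $u$) of the diffusion equation $\nabla_\mu T^{\mu\nu}=\sigma J^\nu$ with $p=0$, together with particle number conservation, the Einstein equations with the scalar field $\phi$ (whose energy-momentum tensor is $-\phi g_{\mu\nu}$), and the scalar field equation. Comoving coordinates are coordinates in which the fluid four-velocity is proportional to $\partial_t$; the center of symmetry is $r=0$. *)

(* Defs.v *)
From Stdlib Require Import Reals Lra.
From Coquelicot Require Import Coquelicot.
Open Scope R_scope.

(* A spacetime point in the chart: x 0 = t, x 1 = R, x 2 = theta, x 3 = psi. *)
Definition point := nat -> R.

Definition upd (x : point) (i : nat) (h : R) : point :=
  fun j => if Nat.eqb j i then h else x j.

Definition pd (f : point -> R) (i : nat) (x : point) : R :=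
  Derive (fun h => f (upd x i h)) (x i).

Definition sum4 (f : nat -> R) : R := sum_f_R0 f 3.

Definition metric := point -> nat -> nat -> R.

Definition Gamma (g gi : metric) (x : point) (a b c : nat) : R :=
  / 2 * sum4 (fun d => gi x a d *
     (pd (fun y => g y d c) b x + pd (fun y => g y d b) c x
      - pd (fun y => g y b c) d x)).

Definition Ricci (g gi : metric) (x : point) (b c : nat) : R :=
  sum4 (fun a =>
    pd (fun y => Gamma g gi y a b c) a x
    - pd (fun y => Gamma g gi y a b a) c x
    + sum4 (fun d => Gamma g gi x a a d * Gamma g gi x d b c
                     - Gamma g gi x a c d * Gamma g gi x d b a)).

Definition Scal (g gi : metric) (x : point) : R :=
  sum4 (fun b => sum4 (fun c => gi x b c * Ricci g gi x b c)).

Definition cov_div (g gi : metric) (V : point -> nat -> R) (x : point) : R :=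
  sum4 (fun m => pd (fun y => V y m) m x
                 + sum4 (fun l => Gamma g gi x m m l * V x l)).

Definition accel (g gi : metric) (u : point -> nat -> R) (x : point) (nu : nat) : R :=
  sum4 (fun m => u x m * pd (fun y => u y nu) m x
                 + sum4 (fun l => Gamma g gi x nu m l * u x m * u x l)).

Definition lower (g : metric) (V : point -> nat -> R) (x : point) (m : nat) : R :=
  sum4 (fun a => g x m a * V x a).

Definition gSph (Phi Psi r : R -> R -> R) : metric :=
  fun x m n =>
    match m, n with
    | 0, 0 => - exp (2 * Phi (x 0%nat) (x 1%nat))
    | 1, 1 => exp (2 * Psi (x 0%nat) (x 1%nat))
    | 2, 2 => (r (x 0%nat) (x 1%nat)) ^ 2
    | 3, 3 => (r (x 0%nat) (x 1%nat)) ^ 2 * (sin (x 2%nat)) ^ 2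
    | _, _ => 0
    end.

Definition gSphInv (Phi Psi r : R -> R -> R) : metric :=
  fun x m n =>
    match m, n with
    | 0, 0 => - exp (- (2 * Phi (x 0%nat) (x 1%nat)))
    | 1, 1 => exp (- (2 * Psi (x 0%nat) (x 1%nat)))
    | 2, 2 => / (r (x 0%nat) (x 1%nat)) ^ 2
    | 3, 3 => / ((r (x 0%nat) (x 1%nat)) ^ 2 * (sin (x 2%nat)) ^ 2)
    | _, _ => 0
    end.

Definition uSph (Phi : R -> R -> R) : point -> nat -> R :=
  fun x m => match m with
             | 0 => exp (- Phi (x 0%nat) (x 1%nat))
             | _ => 0
             end.

Definition lift (f : R -> R -> R) : point -> R := fun x => f (x 0%nat) (x 1%nat).

Definition gFLRW (a : R -> R) (k : R) : metric :=
  fun x m n =>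
    match m, n with
    | 0, 0 => -1
    | 1, 1 => (a (x 0%nat)) ^ 2 / (1 - k * (x 1%nat) ^ 2)
    | 2, 2 => (a (x 0%nat)) ^ 2 * (x 1%nat) ^ 2
    | 3, 3 => (a (x 0%nat)) ^ 2 * (x 1%nat) ^ 2 * (sin (x 2%nat)) ^ 2
    | _, _ => 0
    end.

Definition uStatic : point -> nat -> R :=
  fun x m => match m with 0 => 1 | _ => 0 end.

Definition d_t (f : R -> R -> R) : R -> R -> R := fun t y => Derive (fun s => f s y) t.
Definition d_R (f : R -> R -> R) : R -> R -> R := fun t y => Derive (fun s => f t s) y.

Fixpoint Ck (k : nat) (f : R -> R -> R) (U : R -> R -> Prop) : Prop :=
  match k with
  | O => forall t y, U t y -> continuity_2d_pt f t y
  | S k' => (forall t y, U t y ->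
               ex_derive (fun s => f s y) t /\ ex_derive (fun s => f t s) y)
            /\ Ck k' f U /\ Ck k' (d_t f) U /\ Ck k' (d_R f) U
  end.

Definition smooth_on (f : R -> R -> R) (U : R -> R -> Prop) : Prop :=
  forall k, Ck k f U.

Definition open2 (U : R -> R -> Prop) : Prop :=
  forall t y, U t y -> exists eps, 0 < eps /\
    forall t' y', Rabs (t' - t) < eps -> Rabs (y' - y) < eps -> U t' y'.

(* Main.v *)
Require Import Defs.
From Stdlib Require Import Reals Lra Lia.
From Coquelicot Require Import Coquelicot.
Open Scope R_scope.
Set Bullet Behavior "Strict Subproofs".

Definition GE (Psi r : R -> R -> R) (y : point) (a b c : nat) : R :=
 match a, b, c with
 | 0,1,1 => d_t Psi (y 0%nat) (y 1%nat) * exp (2 * Psi (y 0%nat) (y 1%nat))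
 | 0,2,2 => r (y 0%nat) (y 1%nat) * d_t r (y 0%nat) (y 1%nat)
 | 0,3,3 => r (y 0%nat) (y 1%nat) * d_t r (y 0%nat) (y 1%nat) * sin (y 2%nat) ^ 2
 | 1,0,1 | 1,1,0 => d_t Psi (y 0%nat) (y 1%nat)
 | 1,1,1 => d_R Psi (y 0%nat) (y 1%nat)
 | 1,2,2 => - (r (y 0%nat) (y 1%nat) * d_R r (y 0%nat) (y 1%nat)) / exp (2 * Psi (y 0%nat) (y 1%nat))
 | 1,3,3 => - (r (y 0%nat) (y 1%nat) * d_R r (y 0%nat) (y 1%nat)) * sin (y 2%nat) ^ 2 / exp (2 * Psi (y 0%nat) (y 1%nat))
 | 2,0,2 | 2,2,0 | 3,0,3 | 3,3,0 => d_t r (y 0%nat) (y 1%nat) / r (y 0%nat) (y 1%nat)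
 | 2,1,2 | 2,2,1 | 3,1,3 | 3,3,1 => d_R r (y 0%nat) (y 1%nat) / r (y 0%nat) (y 1%nat)
 | 2,3,3 => - (sin (y 2%nat) * cos (y 2%nat))
 | 3,2,3 | 3,3,2 => cos (y 2%nat) / sin (y 2%nat)
 | _,_,_ => 0
 end.

Section Geo.
Variables (Phi Psi r : R -> R -> R) (y : point).
Hypothesis HPhi : Phi (y 0%nat) (y 1%nat) = 0.
Hypothesis HPhit : Derive (fun s => Phi s (y 1%nat)) (y 0%nat) = 0.
Hypothesis HPhiR : Derive (fun s => Phi (y 0%nat) s) (y 1%nat) = 0.
Hypothesis Hr : r (y 0%nat) (y 1%nat) <> 0.
Hypothesis Hs : sin (y 2%nat) <> 0.
Hypothesis Dpt : ex_derive (fun s => Psi s (y 1%nat)) (y 0%nat).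
Hypothesis DpR : ex_derive (fun s => Psi (y 0%nat) s) (y 1%nat).
Hypothesis Dphit : ex_derive (fun s => Phi s (y 1%nat)) (y 0%nat).
Hypothesis DphiR : ex_derive (fun s => Phi (y 0%nat) s) (y 1%nat).
Hypothesis Drt : ex_derive (fun s => r s (y 1%nat)) (y 0%nat).
Hypothesis DrR : ex_derive (fun s => r (y 0%nat) s) (y 1%nat).

Definition DG (d c b : nat) : R :=
  match d, c, b with
  | 1,1,0 => 2 * Derive (fun s => Psi s (y 1%nat)) (y 0%nat) * exp (2 * Psi (y 0%nat) (y 1%nat))
  | 1,1,1 => 2 * Derive (fun s => Psi (y 0%nat) s) (y 1%nat) * exp (2 * Psi (y 0%nat) (y 1%nat))
  | 2,2,0 => 2 * r (y 0%nat) (y 1%nat) * Derive (fun s => r s (y 1%nat)) (y 0%nat)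
  | 2,2,1 => 2 * r (y 0%nat) (y 1%nat) * Derive (fun s => r (y 0%nat) s) (y 1%nat)
  | 3,3,0 => 2 * r (y 0%nat) (y 1%nat) * Derive (fun s => r s (y 1%nat)) (y 0%nat) * sin (y 2%nat) ^ 2
  | 3,3,1 => 2 * r (y 0%nat) (y 1%nat) * Derive (fun s => r (y 0%nat) s) (y 1%nat) * sin (y 2%nat) ^ 2
  | 3,3,2 => 2 * r (y 0%nat) (y 1%nat) ^ 2 * sin (y 2%nat) * cos (y 2%nat)
  | _,_,_ => 0
  end.

Lemma pdg d c b : pd (fun z => gSph Phi Psi r z d c) b y = DG d c b.
Proof.
  unfold pd, upd, gSph, DG.
  destruct d as [|[|[|[|d]]]]; destruct c as [|[|[|[|c]]]]; simpl;
  try (apply Derive_const);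
  destruct b as [|[|[|[|b]]]]; simpl; try (apply Derive_const);
  apply is_derive_unique; auto_derive; auto; try ring.
  all: try (rewrite HPhit; ring).
  all: try (rewrite HPhiR; ring).
Qed.

Lemma GammaE a b c : Gamma (gSph Phi Psi r) (gSphInv Phi Psi r) y a b c = GE Psi r y a b c.
Proof.
  unfold Gamma, sum4, sum_f_R0. rewrite !pdg.
  unfold gSphInv, GE, DG, d_t, d_R. rewrite HPhi.
  assert (He : exp (2 * Psi (y 0%nat) (y 1%nat)) <> 0) by (apply Rgt_not_eq, exp_pos).
  destruct a as [|[|[|[|a]]]]; destruct b as [|[|[|[|b]]]]; destruct c as [|[|[|[|c]]]]; simpl;
  rewrite ?Rmult_0_r, ?Ropp_0, ?exp_0; try field; auto;
  try (rewrite exp_Ropp; field; auto).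
Qed.
End Geo.


Section Ric.
Variables (Phi Psi r : R -> R -> R) (P : point -> Prop).
Hypothesis Popen : forall x e, P x -> locally (x e) (fun h => P (upd x e h)).
Hypothesis HGam : forall z a b c, P z ->
  Gamma (gSph Phi Psi r) (gSphInv Phi Psi r) z a b c = GE Psi r z a b c.

Lemma pdG x a b c e : P x ->
  pd (fun z => Gamma (gSph Phi Psi r) (gSphInv Phi Psi r) z a b c) e x
  = pd (fun z => GE Psi r z a b c) e x.
Proof.
  intros Hx. unfold pd. apply Derive_ext_loc.
  generalize (Popen x e Hx). apply filter_imp. intros h Hh. apply HGam; auto.
Qed.

Variable x : point.
Hypothesis Hx : P x.
Hypothesis Hth : x 2%nat = PI / 2.
Local Notation t := (x 0%nat).
Local Notation R0 := (x 1%nat).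
Hypothesis Hr : r t R0 <> 0.
Hypothesis Dpt : ex_derive (fun s => Psi s R0) t.
Hypothesis DpR : ex_derive (fun s => Psi t s) R0.
Hypothesis Drt : ex_derive (fun s => r s R0) t.
Hypothesis DrR : ex_derive (fun s => r t s) R0.
Hypothesis Dptt : ex_derive (fun h => d_t Psi h R0) t.
Hypothesis DptR : ex_derive (fun h => d_t Psi t h) R0.
Hypothesis DpRt : ex_derive (fun h => d_R Psi h R0) t.
Hypothesis DpRR : ex_derive (fun h => d_R Psi t h) R0.
Hypothesis Drtt : ex_derive (fun h => d_t r h R0) t.
Hypothesis DrtR : ex_derive (fun h => d_t r t h) R0.
Hypothesis DrRt : ex_derive (fun h => d_R r h R0) t.
Hypothesis DrRR : ex_derive (fun h => d_R r t h) R0.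

Lemma expn0 z : exp z <> 0.
Proof. apply Rgt_not_eq, exp_pos. Qed.

Lemma Hsin : sin (x 2%nat) <> 0.
Proof. rewrite Hth, sin_PI2; lra. Qed.

Ltac evalpd :=
  match goal with |- context [pd (fun z => GE Psi r z ?a ?b ?c) ?e x] =>
    let v := fresh "v" in evar (v : R);
    let H := fresh in
    assert (H : pd (fun z => GE Psi r z a b c) e x = v);
    [ subst v; unfold pd, upd, GE; simpl;
      apply is_derive_unique; auto_derive;
      [ repeat split; auto using Hsin, expn0 | reflexivity ]
    | rewrite H; subst v; clear H ]
  end.


Ltac finish := unfold d_t, d_R; rewrite ?Hth, ?sin_PI2, ?cos_PI2;
  assert (He : exp (2 * Psi (x 0%nat) (x 1%nat)) <> 0) by (apply Rgt_not_eq, exp_pos);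
  field; auto.

Ltac prep := unfold Ricci, sum4, sum_f_R0; rewrite !(pdG x) by exact Hx; rewrite !(HGam x) by exact Hx;
  repeat evalpd; unfold GE; simpl.

Lemma Ric00 : Ricci (gSph Phi Psi r) (gSphInv Phi Psi r) x 0 0 =
  - (d_t (d_t Psi) t R0 + d_t Psi t R0 ^ 2) - 2 * d_t (d_t r) t R0 / r t R0.
Proof. prep. finish. Qed.

Lemma Ric01 : Ricci (gSph Phi Psi r) (gSphInv Phi Psi r) x 0 1 =
  - 2 * (d_R (d_t r) t R0 - d_t Psi t R0 * d_R r t R0) / r t R0.
Proof. prep. finish. Qed.

Lemma Ric11 : Ricci (gSph Phi Psi r) (gSphInv Phi Psi r) x 1 1 =
  exp (2 * Psi t R0) * (d_t (d_t Psi) t R0 + d_t Psi t R0 ^ 2 + 2 * d_t Psi t R0 * d_t r t R0 / r t R0)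
  - 2 * (d_R (d_R r) t R0 - d_R Psi t R0 * d_R r t R0) / r t R0.
Proof. prep. finish. Qed.

Lemma Ric22 : Ricci (gSph Phi Psi r) (gSphInv Phi Psi r) x 2 2 =
  r t R0 * d_t (d_t r) t R0 + d_t r t R0 ^ 2 + 1 + r t R0 * d_t r t R0 * d_t Psi t R0
  - (r t R0 * d_R (d_R r) t R0 + d_R r t R0 ^ 2 - r t R0 * d_R r t R0 * d_R Psi t R0) / exp (2 * Psi t R0).
Proof. prep. finish. Qed.
End Ric.


Lemma cont_R (f : R -> R -> R) t y : continuity_2d_pt f t y -> continuity_pt (fun v => f t v) y.
Proof.
  intros H eps Heps. destruct (H (mkposreal eps Heps)) as [d Hd].
  exists d. split; [apply cond_pos|]. intros v [_ Hv]. simpl in *. unfold R_dist in *.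
  apply Hd; auto. rewrite Rminus_diag, Rabs_R0. apply cond_pos.
Qed.

Lemma cont_t (f : R -> R -> R) t y : continuity_2d_pt f t y -> continuity_pt (fun u => f u y) t.
Proof.
  intros H eps Heps. destruct (H (mkposreal eps Heps)) as [d Hd].
  exists d. split; [apply cond_pos|]. intros v [_ Hv]. simpl in *. unfold R_dist in *.
  apply Hd; auto. rewrite Rminus_diag, Rabs_R0. apply cond_pos.
Qed.

Lemma exd_cont f x : ex_derive f x -> continuity_pt f x.
Proof. intros H. apply continuity_pt_filterlim. apply (ex_derive_continuous f x H). Qed.

Lemma const_closed (f : R -> R) a b : a < b ->
  (forall x, a < x < b -> is_derive f x 0) ->
  (forall x, a <= x <= b -> continuity_pt f x) -> f a = f b.
Proof.
  intros Hab Hd Hc.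
  destruct (MVT_gen f a b (fun _ => 0)) as [c [_ Hc']].
  - rewrite Rmin_left, Rmax_right by lra. auto.
  - rewrite Rmin_left, Rmax_right by lra. auto.
  - lra.
Qed.

Lemma const_open (f : R -> R) a b :
  (forall x, a < x < b -> is_derive f x 0) ->
  forall u v, a < u < b -> a < v < b -> f u = f v.
Proof.
  intros Hd u v Hu Hv.
  assert (Hc : forall x, a < x < b -> continuity_pt f x).
  { intros x Hx. apply exd_cont. eexists; eauto. }
  destruct (Rtotal_order u v) as [H|[H|H]].
  - apply const_closed; [lra | intros x Hx; apply Hd; lra | intros x Hx; apply Hc; lra].
  - subst; auto.
  - symmetry; apply const_closed; [lra | intros x Hx; apply Hd; lra | intros x Hx; apply Hc; lra].
Qed.

Lemma closure1 (f g : R -> R) a beta : continuity_pt f a -> continuity_pt g a -> 0 < beta ->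
  (forall x, a < x < a + beta -> f x = g x) -> f a = g a.
Proof.
  intros Hf Hg Hb H.
  destruct (Req_dec (f a) (g a)) as [E|E]; auto. exfalso.
  set (e := Rabs (f a - g a)).
  assert (He : 0 < e) by (apply Rabs_pos_lt; lra).
  destruct (Hf (e/2)) as [d1 [Hd1 H1]]; [lra|].
  destruct (Hg (e/2)) as [d2 [Hd2 H2]]; [lra|].
  set (s := Rmin (Rmin d1 d2) beta / 2).
  assert (Hm: 0 < Rmin (Rmin d1 d2) beta) by (apply Rmin_pos; [apply Rmin_pos|]; lra).
  assert (Hs0 : 0 < s) by (unfold s; lra).
  assert (Hs1 : s < d1). { unfold s. generalize (Rmin_l (Rmin d1 d2) beta) (Rmin_l d1 d2). lra. }
  assert (Hs2 : s < d2). { unfold s. generalize (Rmin_l (Rmin d1 d2) beta) (Rmin_r d1 d2). lra. }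
  assert (Hs3 : s < beta). { unfold s. generalize (Rmin_r (Rmin d1 d2) beta). lra. }
  assert (Hx : a < a + s < a + beta) by lra.
  specialize (H _ Hx).
  assert (D : R_dist (a + s) a < d1) by (unfold R_dist; replace (a + s - a) with s by ring; rewrite Rabs_pos_eq; lra).
  assert (D' : R_dist (a + s) a < d2) by (unfold R_dist; replace (a + s - a) with s by ring; rewrite Rabs_pos_eq; lra).
  assert (Nq : a <> a + s) by lra.
  specialize (H1 (a+s) (conj (conj I Nq) D)). specialize (H2 (a+s) (conj (conj I Nq) D')).
  simpl in H1, H2. unfold R_dist in H1, H2. rewrite H in H1.
  assert (e <= Rabs (g (a+s) - f a) + Rabs (g (a+s) - g a)).
  { unfold e. replace (f a - g a) with (-(g (a+s) - f a) + (g (a+s) - g a)) by ring.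
    eapply Rle_trans; [apply Rabs_triang|]. rewrite Rabs_Ropp. lra. }
  lra.
Qed.

Lemma loc_int a b x : a < x < b -> locally x (fun h => a < h < b).
Proof.
  intros Hx. assert (He : 0 < Rmin (x - a) (b - x)) by (apply Rmin_pos; lra).
  exists (mkposreal _ He). intros h Hh. unfold ball in Hh; simpl in Hh. unfold AbsRing_ball, abs, minus, plus, opp in Hh; simpl in Hh.
  apply Rabs_def2 in Hh. destruct Hh as [Hh1 Hh2]. generalize (Rmin_l (x-a) (b-x)) (Rmin_r (x-a) (b-x)). intros; split; lra.
Qed.

Lemma loc_T (T : Rbar) t : 0 < t -> Rbar_lt t T -> locally t (fun h => 0 < h /\ Rbar_lt h T).
Proof.
  intros H0 HT. destruct T as [T| |]; simpl in HT.
  - generalize (loc_int 0 T t (conj H0 HT)). apply filter_imp. simpl; tauto.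
  - generalize (loc_int 0 (t+1) t (conj H0 (Rlt_plus_1 t))). apply filter_imp. simpl; tauto.
  - contradiction.
Qed.

Lemma beta_T (T : Rbar) t : 0 <= t -> Rbar_lt t T -> exists beta, 0 < beta /\ forall u, t <= u < t + beta -> Rbar_lt u T.
Proof.
  intros H0 HT. destruct T as [T| |]; simpl in HT.
  - exists (T - t). split; [lra|]. intros u Hu; simpl; lra.
  - exists 1. split; [lra|]. intros; simpl; auto.
  - contradiction.
Qed.

Section Smooth.
Variables (f : R -> R -> R) (U : R -> R -> Prop) (t y : R).
Hypothesis Hs : smooth_on f U.
Hypothesis HU : U t y.
Lemma sm_t : ex_derive (fun s => f s y) t.
Proof. destruct (Hs 1%nat) as [H _]. apply (H t y HU). Qed.
Lemma sm_R : ex_derive (fun s => f t s) y.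
Proof. destruct (Hs 1%nat) as [H _]. apply (H t y HU). Qed.
Lemma sm_tt : ex_derive (fun s => d_t f s y) t.
Proof. destruct (Hs 2%nat) as [_ [_ [[H _] _]]]. apply (H t y HU). Qed.
Lemma sm_tR : ex_derive (fun s => d_t f t s) y.
Proof. destruct (Hs 2%nat) as [_ [_ [[H _] _]]]. apply (H t y HU). Qed.
Lemma sm_Rt : ex_derive (fun s => d_R f s y) t.
Proof. destruct (Hs 2%nat) as [_ [_ [_ [H _]]]]. apply (H t y HU). Qed.
Lemma sm_RR : ex_derive (fun s => d_R f t s) y.
Proof. destruct (Hs 2%nat) as [_ [_ [_ [H _]]]]. apply (H t y HU). Qed.
Lemma sm_c : continuity_2d_pt f t y.
Proof. apply (Hs 0%nat t y HU). Qed.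
Lemma sm_ct : continuity_2d_pt (d_t f) t y.
Proof. destruct (Hs 1%nat) as [_ [_ [H _]]]. apply (H t y HU). Qed.
Lemma sm_cR : continuity_2d_pt (d_R f) t y.
Proof. destruct (Hs 1%nat) as [_ [_ [_ H]]]. apply (H t y HU). Qed.
End Smooth.


Lemma accel1 Phi Psi r (y : point) :
  ex_derive (fun s => Phi (y 0%nat) s) (y 1%nat) ->
  accel (gSph Phi Psi r) (gSphInv Phi Psi r) (uSph Phi) y 1 =
  exp (- (2 * Psi (y 0%nat) (y 1%nat))) * d_R Phi (y 0%nat) (y 1%nat).
Proof.
  intros HD.
  unfold accel, sum4, sum_f_R0, uSph. simpl.
  unfold pd. rewrite !Derive_const.
  unfold Gamma, sum4, sum_f_R0, gSphInv, gSph, pd, upd. simpl.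
  rewrite !Derive_const.
  replace (Derive (fun h => - exp (2 * Phi (y 0%nat) h)) (y 1%nat)) with
     (- (2 * d_R Phi (y 0%nat) (y 1%nat) * exp (2 * Phi (y 0%nat) (y 1%nat)))).
  2:{ symmetry. apply is_derive_unique. auto_derive. auto. unfold d_R. ring. }
  assert (E : exp (2 * Phi (y 0%nat) (y 1%nat)) = / (exp (- Phi (y 0%nat) (y 1%nat)) * exp (- Phi (y 0%nat) (y 1%nat)))).
  { rewrite <- exp_plus, <- exp_Ropp. f_equal. ring. }
  rewrite E. field. apply Rgt_not_eq, exp_pos.
Qed.


Section Main.
Variables (T : Rbar) (Rb sigma : R) (Phi Psi r rho n phi : R -> R -> R) (U : R -> R -> Prop).
Hypothesis HT : Rbar_lt 0 T.
Hypothesis HRb : 0 < Rb.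
Hypothesis Hsig : 0 < sigma.
Hypothesis HUD : forall t R, 0 <= t -> Rbar_lt t T -> 0 <= R <= Rb -> U t R.
Hypothesis HsPhi : smooth_on Phi U.
Hypothesis HsPsi : smooth_on Psi U.
Hypothesis Hsr : smooth_on r U.
Hypothesis Hsrho : smooth_on rho U.
Hypothesis Hsn : smooth_on n U.
Hypothesis Hsphi : smooth_on phi U.
Hypothesis Hrpos : forall t R, 0 <= t -> Rbar_lt t T -> 0 < R < Rb -> 0 < r t R.
Hypothesis HPhib : forall t, 0 <= t -> Rbar_lt t T -> Phi t Rb = 0.
Hypothesis Hr0 : forall R, 0 <= R < Rb -> r 0 R = R.
Hypothesis Hnz : forall t R, 0 <= t -> Rbar_lt t T -> 0 <= R < Rb -> rho t R <> 0 /\ n t R <> 0.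
Hypothesis Heq : forall x : point,
      0 < x 0%nat -> Rbar_lt (x 0%nat) T -> 0 < x 1%nat < Rb -> 0 < x 2%nat < PI ->
      let g := gSph Phi Psi r in
      let gi := gSphInv Phi Psi r in
      let u := uSph Phi in
      cov_div g gi (fun y m => lift rho y * u y m) x = sigma * lift n x /\
      (forall nu, (nu <= 3)%nat -> lift rho x * accel g gi u x nu = 0) /\
      cov_div g gi (fun y m => lift n y * u y m) x = 0 /\
      (forall m nu, (m <= 3)%nat -> (nu <= 3)%nat ->
         Ricci g gi x m nu - / 2 * g x m nu * Scal g gi x + lift phi x * g x m nu
         = lift rho x * lower g u x m * lower g u x nu) /\
      (forall nu, (nu <= 3)%nat ->
         pd (lift phi) nu x = sigma * lower g (fun y m => lift n y * u y m) x nu).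

Definition pt (t R : R) : point := fun i => match i with 0%nat => t | 1%nat => R | _ => PI / 2 end.
Definition Om (t R : R) := 0 < t /\ Rbar_lt t T /\ 0 < R < Rb.
Definition Rs := Rb / 2.

Lemma PI2_bd : 0 < PI / 2 < PI.
Proof. generalize PI_RGT_0; lra. Qed.

Ltac heq t R HO := pose proof (Heq (pt t R) (proj1 HO) (proj1 (proj2 HO)) (proj2 (proj2 HO)) PI2_bd) as HE; cbv zeta in HE.

Lemma OmU t R : Om t R -> U t R.
Proof. intros [H1 [H2 H3]]. apply HUD; auto; lra. Qed.

Lemma Rs_bd : 0 < Rs < Rb.
Proof. unfold Rs; lra. Qed.

Lemma Phi_R0 t R : Om t R -> d_R Phi t R = 0.
Proof.
  intros HO. heq t R HO. destruct HE as [_ [Hacc _]].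
  specialize (Hacc 1%nat ltac:(auto)).
  rewrite accel1 in Hacc by (apply (sm_R _ U); auto; apply OmU; auto).
  simpl in Hacc. unfold lift in Hacc. simpl in Hacc.
  destruct HO as [H1 [H2 H3]].
  destruct (Hnz t R ltac:(lra) H2 ltac:(lra)) as [Hrho _].
  apply Rmult_integral in Hacc. destruct Hacc as [Hacc|Hacc]; [contradiction|].
  apply Rmult_integral in Hacc. destruct Hacc as [Hacc|Hacc]; auto.
  exfalso. generalize (exp_pos (- (2 * Psi t R))). lra.
Qed.


Lemma is_der0 (f : R -> R) x : ex_derive f x -> Derive f x = 0 -> is_derive f x 0.
Proof. intros H1 H2. rewrite <- H2. apply Derive_correct; auto. Qed.

Lemma Phi0_pos t R : 0 < t -> Rbar_lt t T -> 0 <= R <= Rb -> Phi t R = 0.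
Proof.
  intros H1 H2 H3. destruct (Req_dec R Rb) as [E|E]. { subst; apply HPhib; auto; lra. }
  rewrite <- (HPhib t) by (auto; lra).
  apply (const_closed (fun v => Phi t v)). lra.
  - intros v Hv. apply is_der0. apply (sm_R _ U); auto; try (apply HUD; auto; lra).
    apply Phi_R0. repeat split; auto; lra.
  - intros v Hv. apply cont_R. apply (sm_c _ U); auto; try (apply HUD; auto; lra).
Qed.

Lemma Phi0 t R : 0 <= t -> Rbar_lt t T -> 0 <= R <= Rb -> Phi t R = 0.
Proof.
  intros H1 H2 H3. destruct (Req_dec t 0) as [E|E]; [|apply Phi0_pos; auto; lra].
  subst. destruct (beta_T T 0 (Rle_refl 0) H2) as [beta [Hb Hbt]].
  apply (closure1 (fun u => Phi u R) (fun _ => 0) 0 beta).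
  - apply cont_t. apply (sm_c _ U); auto; try (apply HUD; auto; lra).
  - apply continuity_pt_const; intros a b; reflexivity.
  - auto.
  - intros u Hu. apply Phi0_pos; auto; try lra. apply Hbt; lra.
Qed.

Lemma Phi_t0 t R : Om t R -> d_t Phi t R = 0.
Proof.
  intros [H1 [H2 H3]]. unfold d_t. rewrite (Derive_ext_loc _ (fun _ => 0)). apply Derive_const.
  generalize (loc_T T t H1 H2). apply filter_imp. intros h [Hh1 Hh2]. apply Phi0; auto; lra.
Qed.

Definition P3 (z : point) := Om (z 0%nat) (z 1%nat) /\ 0 < z 2%nat < PI.

Lemma P3open x e : P3 x -> locally (x e) (fun h => P3 (upd x e h)).
Proof.
  intros [[H1 [H2 H3]] H4]. unfold P3, Om, upd.
  destruct e as [|[|[|e]]]; simpl.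
  - generalize (loc_T T _ H1 H2). apply filter_imp. intros h [Hh1 Hh2]; auto.
  - generalize (loc_int _ _ _ H3). apply filter_imp. intros h Hh; auto.
  - generalize (loc_int _ _ _ H4). apply filter_imp. intros h Hh; auto.
  - apply filter_forall. intros h; auto.
Qed.

Lemma HGam z a b c : P3 z ->
  Gamma (gSph Phi Psi r) (gSphInv Phi Psi r) z a b c = GE Psi r z a b c.
Proof.
  intros [HO Hth]. assert (HU := OmU _ _ HO). destruct HO as [H1 [H2 H3]].
  apply GammaE.
  - apply Phi0; auto; lra.
  - apply Phi_t0; repeat split; auto; lra.
  - apply Phi_R0; repeat split; auto; lra.
  - apply Rgt_not_eq, Hrpos; auto; lra.
  - apply Rgt_not_eq, sin_gt_0; lra.
  - apply (sm_t _ U); auto.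
  - apply (sm_R _ U); auto.
  - apply (sm_t _ U); auto.
  - apply (sm_R _ U); auto.
  - apply (sm_t _ U); auto.
  - apply (sm_R _ U); auto.
Qed.


Lemma OmD t R : Om t R -> 0 <= t /\ Rbar_lt t T /\ 0 <= R < Rb.
Proof. intros [H1 [H2 H3]]. repeat split; auto; lra. Qed.

Lemma E_phi t R : Om t R -> d_R phi t R = 0 /\ d_t phi t R = - sigma * n t R.
Proof.
  intros HO. heq t R HO. destruct HE as [_ [_ [_ [_ Hphi]]]].
  assert (H0 := Hphi 0%nat ltac:(auto)). assert (H1 := Hphi 1%nat ltac:(auto)).
  assert (Hp0 := Phi0 t R ltac:(destruct HO as [? [? ?]]; lra) ltac:(apply HO) ltac:(destruct HO as [? [? ?]]; lra)).
  unfold lower, sum4, sum_f_R0, gSph, uSph, lift in H0, H1. simpl in H0, H1.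
  unfold pd, upd, lift in H0, H1. simpl in H0, H1. unfold d_t, d_R.
  rewrite Hp0 in H0. rewrite Rmult_0_r, exp_0, Ropp_0, exp_0 in H0.
  split.
  - rewrite H1. ring.
  - rewrite H0. ring.
Qed.

Lemma rpos_Om t R : Om t R -> 0 < r t R.
Proof. intros [H1 [H2 H3]]. apply Hrpos; auto; lra. Qed.

Ltac smt := first [ apply OmU; assumption | apply HUD; (auto || lra) ].

Lemma E_n t R : Om t R -> d_t n t R + n t R * (d_t Psi t R + 2 * d_t r t R / r t R) = 0.
Proof.
  intros HO. heq t R HO. destruct HE as [_ [_ [Hn _]]].
  assert (HU := OmU _ _ HO). assert (HD := OmD _ _ HO).
  assert (Hp0 := Phi0 t R ltac:(lra) ltac:(apply HD) ltac:(lra)).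
  assert (Hpt := Phi_t0 t R HO).
  unfold cov_div, sum4, sum_f_R0 in Hn. rewrite !HGam in Hn by (split; [exact HO | apply PI2_bd]).
  unfold GE, uSph, lift in Hn. simpl in Hn.
  unfold pd, upd in Hn; simpl in Hn.
  replace (Derive (fun h => n h R * exp (- Phi h R)) t) with (d_t n t R) in Hn.
  2:{ symmetry. apply is_derive_unique. auto_derive.
      - repeat split; [apply (sm_t _ U); auto | apply (sm_t _ U); auto].
      - unfold d_t in *. rewrite Hpt, Hp0, Ropp_0, exp_0. ring. }
  rewrite !(Derive_ext (fun h => _ * 0) (fun _ => 0)), !Derive_const in Hn by (intros; ring).
  rewrite Hp0, Ropp_0, exp_0 in Hn.
  rewrite sin_PI2, cos_PI2 in Hn.
  rewrite <- Hn. unfold d_t. field. apply Rgt_not_eq, rpos_Om; auto.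
Qed.


Ltac solv HO := match goal with
  | |- forall (x : point) (e : nat), _ => exact P3open
  | |- forall (z : point) (a b c : nat), _ => exact HGam
  | |- P3 _ => split; [exact HO | apply PI2_bd]
  | |- _ = PI / 2 => reflexivity
  | |- _ <> 0 => apply Rgt_not_eq, rpos_Om; exact HO
  | |- ex_derive (fun h => d_t ?f h ?y) ?x => exact (sm_tt f U x y ltac:(assumption) ltac:(apply OmU; exact HO))
  | |- ex_derive (fun h => d_t ?f ?x h) ?y => exact (sm_tR f U x y ltac:(assumption) ltac:(apply OmU; exact HO))
  | |- ex_derive (fun h => d_R ?f h ?y) ?x => exact (sm_Rt f U x y ltac:(assumption) ltac:(apply OmU; exact HO))
  | |- ex_derive (fun h => d_R ?f ?x h) ?y => exact (sm_RR f U x y ltac:(assumption) ltac:(apply OmU; exact HO))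
  | |- ex_derive (fun h => ?f h ?y) ?x => exact (sm_t f U x y ltac:(assumption) ltac:(apply OmU; exact HO))
  | |- ex_derive (fun h => ?f ?x h) ?y => exact (sm_R f U x y ltac:(assumption) ltac:(apply OmU; exact HO))
  end.

Lemma solve1 a E S p : E <> 0 -> a - / 2 * E * S + p * E = 0 -> / 2 * S = a / E + p.
Proof. intros HE H. replace (/ 2 * S) with ((a - (a - / 2 * E * S + p * E) + p * E) / E) by (field; auto).
  rewrite H. field; auto. Qed.

Definition F00 t R := - (d_t (d_t Psi) t R + d_t Psi t R ^ 2) - 2 * d_t (d_t r) t R / r t R.
Definition F11 t R := exp (2 * Psi t R) * (d_t (d_t Psi) t R + d_t Psi t R ^ 2 + 2 * d_t Psi t R * d_t r t R / r t R)
  - 2 * (d_R (d_R r) t R - d_R Psi t R * d_R r t R) / r t R.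
Definition F22 t R := r t R * d_t (d_t r) t R + d_t r t R ^ 2 + 1 + r t R * d_t r t R * d_t Psi t R
  - (r t R * d_R (d_R r) t R + d_R r t R ^ 2 - r t R * d_R r t R * d_R Psi t R) / exp (2 * Psi t R).

Lemma Ein t R : Om t R ->
  d_R (d_t r) t R = d_t Psi t R * d_R r t R /\
  F11 t R / exp (2 * Psi t R) = F22 t R / r t R ^ 2 /\
  rho t R = F00 t R + F11 t R / exp (2 * Psi t R).
Proof.
  intros HO. heq t R HO. destruct HE as [_ [_ [_ [Hein _]]]].
  assert (HD := OmD _ _ HO).
  assert (Hp0 := Phi0 t R ltac:(lra) ltac:(apply HD) ltac:(lra)).
  assert (H00 := Hein 0%nat 0%nat ltac:(auto) ltac:(auto)).
  assert (H01 := Hein 0%nat 1%nat ltac:(auto) ltac:(auto)).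
  assert (H11 := Hein 1%nat 1%nat ltac:(auto) ltac:(auto)).
  assert (H22 := Hein 2%nat 2%nat ltac:(auto) ltac:(auto)).
  clear Hein.
  rewrite (Ric00 Phi Psi r P3) in H00 by solv HO.
  rewrite (Ric01 Phi Psi r P3) in H01 by solv HO.
  rewrite (Ric11 Phi Psi r P3) in H11 by solv HO.
  rewrite (Ric22 Phi Psi r P3) in H22 by solv HO.
  set (S := Scal _ _ _) in *.
  cbn [pt gSph uSph lift lower sum4 sum_f_R0] in H00, H01, H11, H22.
  unfold sum4 in H00, H01, H11, H22. cbn [sum_f_R0 uSph gSph pt] in H00, H01, H11, H22.
  rewrite Hp0 in H00, H01, H11, H22.
  rewrite ?Rmult_0_r, ?Ropp_0, ?exp_0 in H00, H01, H11, H22.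
  unfold lift in *; cbn [pt] in *.
  assert (Er : r t R <> 0) by (apply Rgt_not_eq, rpos_Om; exact HO).
  assert (EE : exp (2 * Psi t R) <> 0) by apply expn0.
  assert (Er2 : r t R ^ 2 <> 0) by (apply pow_nonzero; exact Er).
  assert (HS1 : / 2 * S = F11 t R / exp (2 * Psi t R) + phi t R).
  { apply solve1; auto. unfold F11. lra. }
  assert (HS2 : / 2 * S = F22 t R / r t R ^ 2 + phi t R).
  { apply solve1; auto. unfold F22. lra. }
  split; [|split].
  - assert (X : -2 * (d_R (d_t r) t R - d_t Psi t R * d_R r t R) / r t R = 0) by lra.
    unfold Rdiv in X. apply Rmult_integral in X. destruct X as [X|X].
    + apply Rmult_integral in X. destruct X as [X|X]; lra.
    + exfalso. apply (Rinv_neq_0_compat _ Er). exact X.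
  - lra.
  - unfold F00. lra.
Qed.


Lemma lt_T s t : s <= t -> Rbar_lt t T -> Rbar_lt s T.
Proof. intros H1 H2. destruct T; simpl in *; auto; lra. Qed.

Lemma phi_hom t R : Om t R -> phi t R = phi t Rs.
Proof.
  intros [H1 [H2 H3]].
  apply (const_open (fun v => phi t v) 0 Rb); auto using Rs_bd.
  intros v Hv. apply is_der0. apply (sm_R _ U); auto. apply HUD; auto; lra.
  apply (E_phi t v). repeat split; auto; lra.
Qed.

Lemma n_hom t R : Om t R -> n t R = n t Rs.
Proof.
  intros HO. assert (HO' : Om t Rs) by (destruct HO as [? [? ?]]; repeat split; auto; apply Rs_bd).
  destruct (E_phi t R HO) as [_ E1]. destruct (E_phi t Rs HO') as [_ E2].
  assert (E : d_t phi t R = d_t phi t Rs).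
  { unfold d_t. apply Derive_ext_loc. destruct HO as [H1 [H2 H3]].
    generalize (loc_T T t H1 H2). apply filter_imp. intros s [Hs1 Hs2].
    apply phi_hom. repeat split; auto; lra. }
  rewrite E1, E2 in E. apply Rmult_eq_reg_l with (- sigma). exact E. lra.
Qed.

Lemma ext_D (f : R -> R -> R) : smooth_on f U -> (forall t R, Om t R -> f t R = f t Rs) ->
  forall t R, 0 <= t -> Rbar_lt t T -> 0 <= R < Rb -> f t R = f t Rs.
Proof.
  intros Hs Hom.
  assert (Hpos : forall t R, 0 < t -> Rbar_lt t T -> 0 <= R < Rb -> f t R = f t Rs).
  { intros t R H1 H2 H3. destruct (Req_dec R 0) as [E|E].
    - subst. apply (closure1 (fun v => f t v) (fun _ => f t Rs) 0 Rb).
      + apply cont_R, (sm_c _ U); auto. apply HUD; auto; lra.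
      + apply continuity_pt_const; intros a b; reflexivity.
      + auto.
      + intros v Hv. apply Hom. repeat split; auto; lra.
    - apply Hom. repeat split; auto; lra. }
  intros t R H1 H2 H3. destruct (Req_dec t 0) as [E|E]; [|apply Hpos; auto; lra].
  subst. destruct (beta_T T 0 (Rle_refl 0) H2) as [beta [Hb Hbt]].
  apply (closure1 (fun u => f u R) (fun u => f u Rs) 0 beta).
  - apply cont_t, (sm_c _ U); auto. apply HUD; auto; lra.
  - apply cont_t, (sm_c _ U); auto. apply HUD; auto; generalize Rs_bd; lra.
  - auto.
  - intros u Hu. apply Hpos; auto. lra. apply Hbt; lra.
Qed.

Lemma UD t R : 0 <= t -> Rbar_lt t T -> 0 <= R <= Rb -> U t R.
Proof. apply HUD. Qed.

Ltac exd t R := match goal with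
  | |- ex_derive (fun h => d_t ?f h ?y) ?x => exact (sm_tt f U x y ltac:(assumption) ltac:(apply UD; auto; lra))
  | |- ex_derive (fun h => d_t ?f ?x h) ?y => exact (sm_tR f U x y ltac:(assumption) ltac:(apply UD; auto; lra))
  | |- ex_derive (fun h => d_R ?f h ?y) ?x => exact (sm_Rt f U x y ltac:(assumption) ltac:(apply UD; auto; lra))
  | |- ex_derive (fun h => d_R ?f ?x h) ?y => exact (sm_RR f U x y ltac:(assumption) ltac:(apply UD; auto; lra))
  | |- ex_derive (fun h => ?f h ?y) ?x => exact (sm_t f U x y ltac:(assumption) ltac:(apply UD; auto; lra))
  | |- ex_derive (fun h => ?f ?x h) ?y => exact (sm_R f U x y ltac:(assumption) ltac:(apply UD; auto; lra))
  end.

Lemma Q_rel t R : 0 <= t -> Rbar_lt t T -> 0 < R < Rb ->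
  n t R * exp (Psi t R) * r t R ^ 2 = n 0 R * exp (Psi 0 R) * R ^ 2.
Proof.
  intros H1 H2 H3. replace (R ^ 2) with (r 0 R ^ 2) by (rewrite Hr0; auto; lra).
  destruct (Req_dec t 0) as [E|E]; [subst; reflexivity|].
  symmetry. apply (const_closed (fun s => n s R * exp (Psi s R) * r s R ^ 2) 0 t). lra.
  - intros s Hs. assert (Hst : Rbar_lt s T) by (apply lt_T with t; auto; lra).
    assert (HO : Om s R) by (repeat split; auto; lra).
    assert (En := E_n s R HO). assert (Er := rpos_Om s R HO).
    auto_derive.
    + repeat split; exd s R.
    + unfold d_t in En.
      replace 0 with (exp (Psi s R) * r s R ^ 2 * (Derive (fun s0 => n s0 R) s + n s R * (Derive (fun s0 => Psi s0 R) s + 2 * Derive (fun s0 => r s0 R) s / r s R))) by (rewrite En; ring).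
      field. lra.
  - intros s Hs. assert (Hst : Rbar_lt s T) by (apply lt_T with t; auto; lra).
    apply exd_cont. auto_derive. repeat split; exd s R.
Qed.

Lemma r_center t : 0 <= t -> Rbar_lt t T -> r t 0 = 0.
Proof.
  intros H1 H2.
  assert (E : n t 0 * exp (Psi t 0) * r t 0 ^ 2 = n 0 0 * exp (Psi 0 0) * 0 ^ 2).
  { apply (closure1 (fun v => n t v * exp (Psi t v) * r t v ^ 2) (fun v => n 0 v * exp (Psi 0 v) * v ^ 2) 0 Rb).
    - apply exd_cont. auto_derive. repeat split; exd t 0.
    - apply exd_cont. auto_derive. repeat split; exd 0 0.
    - auto.
    - intros v Hv. apply Q_rel; auto; lra. }
  destruct (Hnz t 0 H1 H2 ltac:(lra)) as [_ Hn].
  assert (Hx := exp_pos (Psi t 0)).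
  rewrite pow_i in E by lia. rewrite Rmult_0_r in E.
  apply Rmult_integral in E. destruct E as [E|E].
  - apply Rmult_integral in E. destruct E; [contradiction | lra].
  - simpl in E. rewrite Rmult_1_r in E. apply Rmult_integral in E. destruct E; auto.
Qed.


Definition nu t := n t Rs.

Lemma n_nu t R : 0 <= t -> Rbar_lt t T -> 0 <= R < Rb -> n t R = nu t.
Proof. intros; apply ext_D; auto. apply n_hom. Qed.

Lemma dn_nu t R : Om t R -> d_t n t R = Derive nu t.
Proof.
  intros [H1 [H2 H3]]. unfold d_t, nu. apply Derive_ext_loc.
  generalize (loc_T T t H1 H2). apply filter_imp. intros s [Hs1 Hs2].
  apply n_hom. repeat split; auto; lra.
Qed.

Lemma nu_nz t : 0 <= t -> Rbar_lt t T -> nu t <> 0.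
Proof. intros H1 H2. apply (Hnz t Rs H1 H2). generalize Rs_bd; lra. Qed.

Lemma Z0 t R : Om t R -> r t R ^ 2 * d_t r t R + Derive nu t / (3 * nu t) * r t R ^ 3 = 0.
Proof.
  intros HO. destruct HO as [H1 [H2 H3]].
  assert (Hnu := nu_nz t ltac:(lra) H2).
  set (c := Derive nu t / (3 * nu t)).
  assert (E : r t 0 ^ 2 * d_t r t 0 + c * r t 0 ^ 3 = r t R ^ 2 * d_t r t R + c * r t R ^ 3).
  { apply (const_closed (fun v => r t v ^ 2 * d_t r t v + c * r t v ^ 3) 0 R). lra.
    - intros v Hv. assert (HOv : Om t v) by (repeat split; auto; lra).
      destruct (Ein t v HOv) as [E01 _]. assert (En := E_n t v HOv).
      rewrite (dn_nu t v HOv), (n_nu t v ltac:(lra) H2 ltac:(lra)) in En.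
      assert (Er := rpos_Om t v HOv).
      assert (Hp : d_t Psi t v = - Derive nu t / nu t - 2 * d_t r t v / r t v).
      { replace (d_t Psi t v) with ((Derive nu t + nu t * (d_t Psi t v + 2 * d_t r t v / r t v) - Derive nu t - nu t * (2 * d_t r t v / r t v)) / nu t) by (field; lra).
        rewrite En. field; lra. }
      auto_derive.
      + repeat split; exd t v.
      + change (Derive (fun x => d_t r t x) v) with (d_R (d_t r) t v).
        change (Derive (fun x => r t x) v) with (d_R r t v).
        rewrite E01, Hp. unfold c. field. lra.
    - intros v Hv. apply exd_cont. auto_derive. repeat split; exd t v. }
  rewrite r_center in E by (auto; lra). rewrite <- E. ring.
Qed.

Lemma Yrel t R : 0 <= t -> Rbar_lt t T -> 0 < R < Rb -> nu t * r t R ^ 3 = nu 0 * R ^ 3.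
Proof.
  intros H1 H2 H3. replace (R ^ 3) with (r 0 R ^ 3) by (rewrite Hr0; auto; lra).
  destruct (Req_dec t 0) as [E|E]; [subst; reflexivity|].
  assert (HRs := Rs_bd).
  symmetry. apply (const_closed (fun s => nu s * r s R ^ 3) 0 t). lra.
  - intros s Hs. assert (Hst : Rbar_lt s T) by (apply lt_T with t; auto; lra).
    assert (HO : Om s R) by (repeat split; auto; lra).
    assert (Z := Z0 s R HO). assert (Hnu := nu_nz s ltac:(lra) Hst).
    auto_derive.
    + repeat split; unfold nu; exd s R.
    + replace 0 with (3 * nu s * (r s R ^ 2 * d_t r s R + Derive nu s / (3 * nu s) * r s R ^ 3)) by (rewrite Z; ring).
      unfold d_t. change (Derive (fun x => nu x) s) with (Derive nu s). field. auto.
  - intros s Hs. assert (Hst : Rbar_lt s T) by (apply lt_T with t; auto; lra).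
    apply exd_cont. auto_derive. repeat split; unfold nu; exd s R.
Qed.

Lemma cube_inj x y : 0 < x -> 0 < y -> x ^ 3 = y ^ 3 -> x = y.
Proof.
  intros Hx Hy E. destruct (Rtotal_order x y) as [H|[H|H]]; auto.
  - exfalso. assert (0 < y*y + x*y + x*x) by nra.
    assert (y ^ 3 - x ^ 3 = (y - x) * (y*y + x*y + x*x)) by ring.
    assert (0 < (y - x) * (y*y + x*y + x*x)) by (apply Rmult_lt_0_compat; lra). lra.
  - exfalso. assert (0 < y*y + x*y + x*x) by nra.
    assert (x ^ 3 - y ^ 3 = (x - y) * (y*y + x*y + x*x)) by ring.
    assert (0 < (x - y) * (y*y + x*y + x*x)) by (apply Rmult_lt_0_compat; lra). lra.
Qed.

Definition a t := r t Rs / Rs.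

Lemma a_pos t : 0 <= t -> Rbar_lt t T -> 0 < a t.
Proof. intros. unfold a. generalize Rs_bd; intros. apply Rdiv_lt_0_compat; [apply Hrpos|]; auto; lra. Qed.

Lemma r_a t R : 0 <= t -> Rbar_lt t T -> 0 <= R < Rb -> r t R = a t * R.
Proof.
  intros H1 H2 H3. assert (HRs := Rs_bd). destruct (Req_dec R 0) as [E|E].
  { subst. rewrite r_center by auto. ring. }
  assert (Y1 := Yrel t R H1 H2 ltac:(lra)). assert (Y2 := Yrel t Rs H1 H2 HRs).
  assert (Hnu := nu_nz t H1 H2). assert (Hnu0 := nu_nz 0 ltac:(lra) HT).
  assert (P1 := Hrpos t R H1 H2 ltac:(lra)). assert (P2 := Hrpos t Rs H1 H2 HRs).
  unfold a. apply Rmult_eq_reg_r with Rs; [|lra].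
  replace (r t Rs / Rs * R * Rs) with (r t Rs * R) by (field; lra).
  apply cube_inj; try nra.
  apply Rmult_eq_reg_l with (nu t); auto.
  rewrite !Rpow_mult_distr.
  replace (nu t * (r t R ^ 3 * Rs ^ 3)) with ((nu t * r t R ^ 3) * Rs ^ 3) by ring.
  replace (nu t * (r t Rs ^ 3 * R ^ 3)) with ((nu t * r t Rs ^ 3) * R ^ 3) by ring.
  rewrite Y1, Y2. ring.
Qed.

Lemma nu_a t : 0 <= t -> Rbar_lt t T -> nu 0 = nu t * a t ^ 3.
Proof.
  intros H1 H2. assert (HRs := Rs_bd). assert (Y := Yrel t Rs H1 H2 HRs).
  rewrite (r_a t Rs H1 H2 ltac:(lra)) in Y.
  apply Rmult_eq_reg_r with (Rs ^ 3). rewrite <- Y. ring.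
  apply pow_nonzero; lra.
Qed.

Lemma Psi_a t R : 0 <= t -> Rbar_lt t T -> 0 < R < Rb -> exp (Psi t R) = a t * exp (Psi 0 R).
Proof.
  intros H1 H2 H3. assert (Q := Q_rel t R H1 H2 H3).
  rewrite (n_nu t R H1 H2 ltac:(lra)), (n_nu 0 R ltac:(lra) HT ltac:(lra)) in Q.
  rewrite (r_a t R H1 H2 ltac:(lra)), (nu_a t H1 H2) in Q.
  assert (Hnu := nu_nz t H1 H2). assert (Ha := a_pos t H1 H2).
  apply Rmult_eq_reg_l with (nu t * a t ^ 2 * R ^ 2).
  - rewrite <- Rmult_assoc. replace (nu t * a t ^ 2 * R ^ 2 * exp (Psi t R)) with (nu t * exp (Psi t R) * (a t * R) ^ 2) by ring.
    rewrite Q. ring.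
  - apply Rmult_integral_contrapositive_currified; [apply Rmult_integral_contrapositive_currified|]; auto; apply pow_nonzero; lra.
Qed.


Definition A1 t := d_t r t Rs / Rs.
Definition A2 t := d_t (d_t r) t Rs / Rs.

Lemma Da t : 0 <= t -> Rbar_lt t T -> ex_derive a t /\ Derive a t = A1 t.
Proof.
  intros H1 H2. assert (HRs := Rs_bd).
  assert (H : is_derive a t (A1 t)).
  { unfold a, A1. auto_derive. exd t Rs. unfold d_t. field. lra. }
  split; [eexists; exact H | apply is_derive_unique; exact H].
Qed.

Lemma DA1 t : 0 <= t -> Rbar_lt t T -> ex_derive A1 t /\ Derive A1 t = A2 t.
Proof.
  intros H1 H2. assert (HRs := Rs_bd).
  assert (H : is_derive A1 t (A2 t)).
  { unfold A1, A2. auto_derive. exd t Rs. unfold d_t at 2. field. lra. }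
  split; [eexists; exact H | apply is_derive_unique; exact H].
Qed.

Lemma locT t : Om t Rs -> locally t (fun s => 0 <= s /\ Rbar_lt s T).
Proof. intros [H1 [H2 _]]. generalize (loc_T T t H1 H2). apply filter_imp. intros s [? ?]; split; auto; lra. Qed.

Ltac fixd := repeat match goal with |- context [Derive (fun x => ?f x) ?t] => change (Derive (fun x => f x) t) with (Derive f t) end.

Lemma locs t R : Om t R -> locally t (fun s => 0 <= s /\ Rbar_lt s T /\ Om s R).
Proof. intros [H1 [H2 H3]]. generalize (loc_T T t H1 H2). apply filter_imp. intros s [? ?]; repeat split; auto; lra. Qed.
Lemma locv t R : Om t R -> locally R (fun v => Om t v).
Proof. intros [H1 [H2 H3]]. generalize (loc_int 0 Rb R H3). apply filter_imp. intros v Hv; split; [|split]; auto. Qed.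

Ltac omb HO := let H1 := fresh "H1" in let H2 := fresh "H2" in let H3 := fresh "H3" in
  pose proof HO as [H1 [H2 H3]].

Lemma D1 t R : Om t R -> d_t r t R = A1 t * R.
Proof.
  intros HO. omb HO. unfold d_t. rewrite (Derive_ext_loc _ (fun s => a s * R)).
  - destruct (Da t ltac:(lra) H2) as [Hd HD]. apply is_derive_unique. auto_derive; auto. fixd. rewrite HD; ring.
  - generalize (locs t R HO). apply filter_imp. intros s [? [? ?]]. apply r_a; auto; lra.
Qed.

Lemma D2 t R : Om t R -> d_t (d_t r) t R = A2 t * R.
Proof.
  intros HO. omb HO. unfold d_t at 1. rewrite (Derive_ext_loc _ (fun s => A1 s * R)).
  - destruct (DA1 t ltac:(lra) H2) as [Hd HD]. apply is_derive_unique. auto_derive; auto. fixd. rewrite HD; ring.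
  - generalize (locs t R HO). apply filter_imp. intros s [? [? ?]]. apply D1; auto.
Qed.

Lemma D3 t R : Om t R -> d_R r t R = a t.
Proof.
  intros HO. omb HO. unfold d_R. rewrite (Derive_ext_loc _ (fun v => a t * v)).
  - apply is_derive_unique. auto_derive; auto. ring.
  - generalize (locv t R HO). apply filter_imp. intros v [? [? ?]]. apply r_a; auto; lra.
Qed.

Lemma D4 t R : Om t R -> d_R (d_R r) t R = 0.
Proof.
  intros HO. unfold d_R at 1. rewrite (Derive_ext_loc _ (fun v => a t)).
  - apply Derive_const.
  - generalize (locv t R HO). apply filter_imp. intros v Hv. apply D3; auto.
Qed.

Lemma D5 t R : 0 <= t -> Rbar_lt t T -> 0 < R < Rb -> Psi t R = ln (a t) + Psi 0 R.
Proof.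
  intros H1 H2 H3.
  assert (E := Psi_a t R H1 H2 H3). assert (Ha := a_pos t H1 H2).
  rewrite <- (ln_exp (Psi t R)), E, ln_mult, ln_exp; auto. apply exp_pos.
Qed.

Lemma D9 t R : 0 <= t -> Rbar_lt t T -> 0 < R < Rb -> exp (2 * Psi t R) = a t ^ 2 * exp (2 * Psi 0 R).
Proof.
  intros H1 H2 H3. rewrite D5 by auto. replace (2 * (ln (a t) + Psi 0 R)) with (ln (a t) + ln (a t) + 2 * Psi 0 R) by ring.
  rewrite !exp_plus, exp_ln by (apply a_pos; auto). ring.
Qed.

Lemma D6 t R : Om t R -> d_t Psi t R = A1 t / a t.
Proof.
  intros HO. omb HO. unfold d_t. rewrite (Derive_ext_loc _ (fun s => ln (a s) + Psi 0 R)).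
  - destruct (Da t ltac:(lra) H2) as [Hd HD]. assert (Ha := a_pos t ltac:(lra) H2).
    apply is_derive_unique. auto_derive; auto. fixd. rewrite HD. field. lra.
  - generalize (locs t R HO). apply filter_imp. intros s [? [? ?]]. apply D5; auto.
Qed.

Lemma D7 t R : Om t R -> d_t (d_t Psi) t R = (A2 t * a t - A1 t ^ 2) / a t ^ 2.
Proof.
  intros HO. omb HO. unfold d_t at 1. rewrite (Derive_ext_loc _ (fun s => A1 s / a s)).
  - destruct (Da t ltac:(lra) H2) as [Hd HD]. destruct (DA1 t ltac:(lra) H2) as [Hd1 HD1].
    assert (Ha := a_pos t ltac:(lra) H2).
    apply is_derive_unique. auto_derive; [repeat split; auto; lra | fixd; rewrite HD, HD1; field; lra].
  - generalize (locs t R HO). apply filter_imp. intros s [? [? ?]]. apply D6; auto.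
Qed.

Lemma D8 t R : Om t R -> d_R Psi t R = d_R Psi 0 R.
Proof.
  intros HO. omb HO. unfold d_R. rewrite (Derive_ext_loc _ (fun v => ln (a t) + Psi 0 v)).
  - apply is_derive_unique. auto_derive. exd 0 R. ring.
  - generalize (locv t R HO). apply filter_imp. intros v [? [? ?]]. apply D5; auto; lra.
Qed.


Lemma tstar : exists ts, Om ts Rs /\ forall R, 0 < R < Rb -> Om ts R.
Proof.
  destruct (beta_T T 0 (Rle_refl 0) HT) as [beta [Hb Hbt]].
  exists (beta / 2). assert (H : Rbar_lt (beta / 2) T) by (apply Hbt; lra).
  split; [repeat split; auto; try lra; apply Rs_bd|].
  intros R HR. repeat split; auto; lra.
Qed.

Lemma prel R : 0 < R < Rb -> R * d_R Psi 0 R = exp (2 * Psi 0 R) - 1.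
Proof.
  intros HR. destruct tstar as [ts [_ Hts]]. assert (HO := Hts R HR). omb HO.
  destruct (Ein ts R HO) as [_ [E2 _]]. unfold F11, F22 in E2.
  rewrite (D7 ts R HO), (D6 ts R HO), (D2 ts R HO), (D1 ts R HO), (D4 ts R HO), (D3 ts R HO), (D8 ts R HO) in E2.
  rewrite (D9 ts R ltac:(lra) H2 H3) in E2. rewrite (r_a ts R ltac:(lra) H2 ltac:(lra)) in E2.
  assert (Ha := a_pos ts ltac:(lra) H2). assert (HG := exp_pos (2 * Psi 0 R)).
  set (G := exp (2 * Psi 0 R)) in *. set (p := d_R Psi 0 R) in *. set (aa := a ts) in *.
  set (B1 := A1 ts) in *. set (B2 := A2 ts) in *.
  match type of E2 with ?L = ?Rr =>
    assert (K : L - Rr = (R * p - (G - 1)) / (aa ^ 2 * R ^ 2 * G)) by (field; repeat split; lra) end.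
  rewrite E2, Rminus_diag in K. symmetry in K.
  unfold Rdiv in K. apply Rmult_integral in K. destruct K as [K|K].
  - lra.
  - exfalso. assert (Hd : 0 < aa ^ 2 * R ^ 2 * G).
    { apply Rmult_lt_0_compat; [apply Rmult_lt_0_compat|]; [apply pow_lt; lra | apply pow_lt; lra | lra]. }
    exact (Rinv_neq_0_compat _ (Rgt_not_eq _ _ Hd) K).
Qed.

Definition hk v := (1 - exp (- (2 * Psi 0 v))) / v ^ 2.
Definition k := hk Rs.

Lemma Gm_k v : 0 < v < Rb -> exp (- (2 * Psi 0 v)) = 1 - k * v ^ 2.
Proof.
  intros Hv.
  assert (E : hk v = k).
  { unfold k. apply (const_open hk 0 Rb); auto; [|apply Rs_bd].
    intros x Hx. unfold hk. assert (P := prel x Hx).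
    auto_derive.
    - split; [exd 0 x | split; [nra | auto]].
    - change (Derive (fun y => Psi 0 y) x) with (d_R Psi 0 x).
      replace (d_R Psi 0 x) with ((exp (2 * Psi 0 x) - 1) / x) by (rewrite <- P; field; lra).
      rewrite exp_Ropp. assert (HG := exp_pos (2 * Psi 0 x)). field. lra. }
  unfold hk in E. rewrite <- E. field. lra.
Qed.

Lemma rho_F t R : Om t R -> rho t R = -2 * A2 t / a t + 2 * (A1 t ^ 2 + k) / a t ^ 2.
Proof.
  intros HO. omb HO.
  destruct (Ein t R HO) as [_ [_ E3]]. unfold F00, F11 in E3.
  rewrite (D7 t R HO), (D6 t R HO), (D2 t R HO), (D1 t R HO), (D4 t R HO), (D3 t R HO), (D8 t R HO) in E3.
  rewrite (D9 t R ltac:(lra) H2 H3) in E3. rewrite (r_a t R ltac:(lra) H2 ltac:(lra)) in E3.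
  assert (P := prel R H3). assert (Gk := Gm_k R H3).
  assert (Ha := a_pos t ltac:(lra) H2).
  assert (HK : 0 < 1 - k * R ^ 2) by (rewrite <- Gk; apply exp_pos).
  replace (d_R Psi 0 R) with ((exp (2 * Psi 0 R) - 1) / R) in E3 by (rewrite <- P; field; lra).
  replace (exp (2 * Psi 0 R)) with (/ (1 - k * R ^ 2)) in E3 by (rewrite <- Gk, <- exp_Ropp; f_equal; ring).
  rewrite E3. field. repeat split; lra.
Qed.

Lemma rho_hom t R : Om t R -> rho t R = rho t Rs.
Proof.
  intros HO. assert (HO' : Om t Rs) by (destruct HO as [? [? ?]]; repeat split; auto; apply Rs_bd).
  rewrite (rho_F t R HO), (rho_F t Rs HO'). reflexivity.
Qed.


Lemma E11pos t R : 0 <= t -> Rbar_lt t T -> 0 < R < Rb -> exp (2 * Psi t R) = a t ^ 2 / (1 - k * R ^ 2).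
Proof.
  intros H1 H2 H3. rewrite D9 by auto. rewrite <- Gm_k by auto. rewrite exp_Ropp.
  field. apply Rgt_not_eq, exp_pos.
Qed.

Lemma final :
  (forall t R R', 0 <= t -> Rbar_lt t T -> 0 <= R < Rb -> 0 <= R' < Rb ->
     rho t R = rho t R' /\ n t R = n t R' /\ phi t R = phi t R') /\
  exists (a : R -> R) (k : R),
    (forall t, 0 <= t -> Rbar_lt t T -> 0 < a t) /\
    (forall x : point, 0 <= x 0%nat -> Rbar_lt (x 0%nat) T -> 0 <= x 1%nat < Rb ->
       0 < 1 - k * (x 1%nat) ^ 2 /\
       (forall m nu, gSph Phi Psi r x m nu = gFLRW a k x m nu) /\
       (forall m, uSph Phi x m = uStatic x m)).
Proof.
  split.
  - intros t R R' H1 H2 H3 H4.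
    rewrite (ext_D rho Hsrho rho_hom t R H1 H2 H3), (ext_D rho Hsrho rho_hom t R' H1 H2 H4).
    rewrite (ext_D n Hsn n_hom t R H1 H2 H3), (ext_D n Hsn n_hom t R' H1 H2 H4).
    rewrite (ext_D phi Hsphi phi_hom t R H1 H2 H3), (ext_D phi Hsphi phi_hom t R' H1 H2 H4).
    auto.
  - exists a, k. split; [exact a_pos|]. intros x H1 H2 H3.
    set (t := x 0%nat) in *. set (R := x 1%nat) in *.
    assert (Hk : 0 < 1 - k * R ^ 2).
    { destruct (Req_dec R 0) as [E|E].
      - rewrite E. simpl. lra.
      - rewrite <- Gm_k by lra. apply exp_pos. }
    assert (E11 : exp (2 * Psi t R) = a t ^ 2 / (1 - k * R ^ 2)).
    { destruct (Req_dec R 0) as [E|E]; [|apply E11pos; auto; lra].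
      rewrite E. apply (closure1 (fun v => exp (2 * Psi t v)) (fun v => a t ^ 2 / (1 - k * v ^ 2)) 0 Rb).
      - apply exd_cont. auto_derive. repeat split. exd t 0.
      - apply exd_cont. auto_derive. repeat split.
        match goal with |- ?e <> 0 => replace e with 1 by ring; lra end.
      - auto.
      - intros v Hv. apply E11pos; auto; lra. }
    assert (HP : Phi t R = 0) by (apply Phi0; auto; lra).
    assert (Hr : r t R = a t * R) by (apply r_a; auto).
    split; [exact Hk|split].
    + intros m nu. destruct m as [|[|[|[|m]]]]; destruct nu as [|[|[|[|nu]]]]; cbn [gSph gFLRW]; try reflexivity.
      * fold t R. rewrite HP, Rmult_0_r, exp_0. reflexivity.
      * fold t R. exact E11.
      * fold t R. rewrite Hr. ring.
      * fold t R. rewrite Hr. ring.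
    + intros m. destruct m as [|m]; cbn [uSph uStatic]; try reflexivity.
      fold t R. rewrite HP, Ropp_0, exp_0. reflexivity.
Qed.

End Main.

Theorem mainTheorem1
  (T : Rbar) (Rb sigma : R)
  (Phi Psi r rho n phi : R -> R -> R)
  (U : R -> R -> Prop) :
  Rbar_lt 0 T -> 0 < Rb -> 0 < sigma ->
  (* regularity: all unknowns smooth on an open set containing [0,T) x [0,Rb] *)
  open2 U ->
  (forall t R, 0 <= t -> Rbar_lt t T -> 0 <= R <= Rb -> U t R) ->
  smooth_on Phi U -> smooth_on Psi U -> smooth_on r U ->
  smooth_on rho U -> smooth_on n U -> smooth_on phi U ->
  (* nondegeneracy of the areal radius away from the center *)
  (forall t R, 0 <= t -> Rbar_lt t T -> 0 < R < Rb -> 0 < r t R) ->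
  (* normalization of the coordinates *)
  (forall t, 0 <= t -> Rbar_lt t T -> Phi t Rb = 0) ->
  (forall R, 0 <= R < Rb -> r 0 R = R) ->
  (* rho and n nowhere vanishing on V *)
  (forall t R, 0 <= t -> Rbar_lt t T -> 0 <= R < Rb -> rho t R <> 0 /\ n t R <> 0) ->
  (* the field equations at every point of the chart *)
  (forall x : point,
      0 < x 0%nat -> Rbar_lt (x 0%nat) T -> 0 < x 1%nat < Rb -> 0 < x 2%nat < PI ->
      let g := gSph Phi Psi r in
      let gi := gSphInv Phi Psi r in
      let u := uSph Phi in
      (* nabla_mu (rho u^mu) = sigma n *)
      cov_div g gi (fun y m => lift rho y * u y m) x = sigma * lift n x /\
      (* rho u^mu nabla_mu u^nu = 0 *)
      (forall nu, (nu <= 3)%nat -> lift rho x * accel g gi u x nu = 0) /\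
      (* nabla_mu (n u^mu) = 0 *)
      cov_div g gi (fun y m => lift n y * u y m) x = 0 /\
      (* Einstein equations with T_{mu nu} = rho u_mu u_nu *)
      (forall m nu, (m <= 3)%nat -> (nu <= 3)%nat ->
         Ricci g gi x m nu - / 2 * g x m nu * Scal g gi x + lift phi x * g x m nu
         = lift rho x * lower g u x m * lower g u x nu) /\
      (* nabla_nu phi = sigma J_nu, J^mu = n u^mu *)
      (forall nu, (nu <= 3)%nat ->
         pd (lift phi) nu x = sigma * lower g (fun y m => lift n y * u y m) x nu)) ->
  (* conclusion *)
  (forall t R R', 0 <= t -> Rbar_lt t T -> 0 <= R < Rb -> 0 <= R' < Rb ->
     rho t R = rho t R' /\ n t R = n t R' /\ phi t R = phi t R') /\
  exists (a : R -> R) (k : R),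
    (forall t, 0 <= t -> Rbar_lt t T -> 0 < a t) /\
    (forall x : point, 0 <= x 0%nat -> Rbar_lt (x 0%nat) T -> 0 <= x 1%nat < Rb ->
       0 < 1 - k * (x 1%nat) ^ 2 /\
       (forall m nu, gSph Phi Psi r x m nu = gFLRW a k x m nu) /\
       (forall m, uSph Phi x m = uStatic x m)).
Proof.
  intros HT HRb Hsig HUo HUD HsPhi HsPsi Hsr Hsrho Hsn Hsphi Hrpos HPhib Hr0 Hnz Heq.
  eapply final; eassumption.
Qed.
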